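(* Let $v\ge 0$. The optimal value of $$\min_{y\in\mathbb{R}^{n^-}}\ -\sum_{i=1}^{n^-}\left(\frac{y_i}{\lambda}\right)^{1/\beta}\quad\text{s.t.}\quad y_1\ge\cdots\ge y_{n^-}\ge 0,\qquad \sum_{i=1}^{n^-}h^-_iy_i=v$$ equals $$-\left(\frac{v}{\lambda}\right)^{1/\beta}\cdot\max_{L\in\{1,\dots,n^-\}} L\cdot\Big(\sum_{i=1}^{L}h^-_i\Big)^{-1/\beta}.$$
   Context: Fix $N\in\mathbb{N}$, $\beta\in(0,1)$, $\lambda>0$, and an integer $1\le n^-\le N$. A function $f:[0,1]\to\mathbb{R}$ is inverse S-shaped if it is strictly increasing, continuously differentiable, and there is $x_0\in[0,1]$ such that $f'$ is strictly decreasing on $[0,x_0]$ and strictly increasing on $[x_0,1]$. Let $W^-:[0,1]\to[0,1]$ be inverse S-shaped with $W^-(0)=0$, $W^-(1)=1$, and $h^-_i:=W^-\!\left(\frac{i}{N}\right)-W^-\!\left(\frac{i-1}{N}\right)$ for $i=1,\dots,n^-$. *)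

(* Defs.v *)
From HB Require Import structures.
From mathcomp Require Import all_boot all_order all_algebra.
From mathcomp Require Import all_classical all_reals all_analysis.
Set Implicit Arguments. Unset Strict Implicit. Unset Printing Implicit Defensive.
Import Order.TTheory GRing.Theory Num.Theory.
Import numFieldNormedType.Exports.
Local Open Scope classical_set_scope.
Local Open Scope ring_scope.

Definition inverse_S_shaped (R : realType) (f : R -> R) : Prop :=
  (forall a b : R, 0 <= a -> a < b -> b <= 1 -> f a < f b) /\
  exists df : R -> R,
    [/\ {within `[0, 1], continuous df},
        (forall x : R, 0 < x < 1 -> is_derive x 1 f (df x)),
        (fun t : R => t^-1 * (f t - f 0)) @ 0^'+ --> df 0,
        (fun t : R => t^-1 * (f (1 + t) - f 1)) @ 0^'- --> df 1 &
        exists x0 : R, [/\ 0 <= x0 <= 1,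
          (forall a b : R, 0 <= a -> a < b -> b <= x0 -> df b < df a) &
          (forall a b : R, x0 <= a -> a < b -> b <= 1 -> df a < df b)]].

(* h^-_i = W(i/N) - W((i-1)/N), for i >= 1 (1-indexed) *)
Definition hminus (R : realType) (W : R -> R) (N i : nat) : R :=
  W (i%:R / N%:R) - W ((i - 1)%N%:R / N%:R).

(* objective: - sum_{i=1}^{n} (y_i/lambda)^(1/beta); y : 'I_n, y i = y_{i+1} *)
Definition objective (R : realType) (n : nat) (beta lambda : R) (y : 'I_n -> R) : R :=
  - \sum_(i < n) powR (y i / lambda) (1 / beta).

Definition feasible (R : realType) (W : R -> R) (N n : nat) (v : R)
  (y : 'I_n -> R) : Prop :=
  (forall i j : 'I_n, (i <= j)%N -> y j <= y i) /\
  (forall i : 'I_n, 0 <= y i) /\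
  \sum_(i < n) hminus W N i.+1 * y i = v.

(* Main.v *)
Require Import Defs.
From HB Require Import structures.
From mathcomp Require Import all_boot all_order all_algebra.
From mathcomp Require Import all_classical all_reals all_analysis.
From mathcomp Require Import ring lra.
Import Order.TTheory GRing.Theory Num.Theory.
Local Open Scope ring_scope.
Section Aux.
Variable R : realType.

Let alg1 (p : R) : p != 0 -> p - 1 != 0 -> p^-1 + (p / (p - 1))^-1 = 1.
Proof. move=> H1 H2; field; rewrite H1 H2 //. Qed.
Let alg2 (p : R) : p != 0 -> p - 1 != 0 -> (p - 1) * (p / (p - 1)) = p.
Proof. move=> H1 H2; field; rewrite H2 //. Qed.
Let alg3 (p a b : R) : p != 0 -> p - 1 != 0 ->
  p * (a / p + b / (p / (p - 1))) = a + (p - 1) * b.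
Proof. move=> H1 H2; field; rewrite H1 H2 //. Qed.
Let alg4 (p A B z m : R) : B + p * A * (z - m) = p * (z * A) - (p - 1) * (m * A) + (B - m * A).
Proof. ring. Qed.

Lemma tangent_powR (p m z : R) : 1 < p -> 0 < m -> 0 <= z ->
  m `^ p + p * m `^ (p - 1) * (z - m) <= z `^ p.
Proof.
move=> p1 m0 z0.
have p0 : 0 < p by apply: lt_trans p1.
have p10 : 0 < p - 1 by rewrite subr_gt0.
have q0 : 0 < p / (p - 1) by rewrite divr_gt0.
have pq : p^-1 + (p/(p-1))^-1 = 1 by apply: alg1; rewrite gt_eqF.
have := conjugate_powR z0 (powR_ge0 m (p - 1)) p0 q0 pq.
rewrite -powRrM alg2 ?gt_eqF // => H.
have mA : m * m `^ (p - 1) = m `^ p by rewrite mulr_powRB1 // ltW.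
have := ler_wpM2l (ltW p0) H.
rewrite alg3 ?gt_eqF // => H2.
rewrite alg4 mA subrr addr0.
lra.
Qed.

Lemma jensen_powR (I : eqType) (r : seq I) (t z : I -> R) (p : R) : 1 < p ->
  (forall k, k \in r -> 0 <= t k) -> \sum_(k <- r) t k = 1 ->
  (forall k, k \in r -> 0 <= z k) ->
  (\sum_(k <- r) t k * z k) `^ p <= \sum_(k <- r) t k * z k `^ p.
Proof.
move=> p1 t0 t1 z0.
have p0 : 0 < p by apply: lt_trans p1.
have rge0 : 0 <= \sum_(k <- r) t k * z k `^ p.
  by rewrite big_seq sumr_ge0 // => k kr; rewrite mulr_ge0 ?t0 ?powR_ge0.
set m := \sum_(k <- r) t k * z k.
have m0 : 0 <= m by rewrite /m big_seq sumr_ge0 // => k kr; rewrite mulr_ge0 ?t0 ?z0.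
case: (eqVneq m 0) => [->|mn0]; first by rewrite powR0 ?gt_eqF.
have mp : 0 < m by rewrite lt_neqAle eq_sym mn0 m0.
set c := p * m `^ (p - 1).
apply: (@le_trans _ _ (\sum_(k <- r) t k * (m `^ p + c * (z k - m)))).
  have -> : \sum_(k <- r) t k * (m `^ p + c * (z k - m)) =
      \sum_(k <- r) ((m `^ p - c * m) * t k + c * (t k * z k)).
    by apply: eq_bigr => k _; ring.
  rewrite big_split /= -!mulr_sumr t1 -/m.
  have -> : (m `^ p - c * m) * 1 + c * m = m `^ p by ring.
  by [].
rewrite big_seq [X in _ <= X]big_seq; apply: ler_sum => k kr.
by apply: ler_wpM2l; [exact: t0 | rewrite /c; apply: tangent_powR => //; exact: z0].
Qed.

Lemma sum_cond_le (n k : nat) (F : nat -> R) : (k < n)%N ->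
  \sum_(0 <= i < n) (if (i <= k)%N then F i else 0) = \sum_(0 <= i < k.+1) F i.
Proof.
move=> kn; rewrite -big_mkcond (big_nat_widen 0 k.+1 n xpredT F kn) /=.
by apply: eq_bigl => i; rewrite ltnS.
Qed.

Let alg5 (d H u : R) : H != 0 -> u != 0 -> d * H / u * (u / H) = d.
Proof. move=> H1 H2; field; rewrite H1 H2 //. Qed.

Lemma main_ineq (n : nat) (p u : R) (h Z : nat -> R) :
  1 < p -> (forall i, (i < n)%N -> 0 < h i) ->
  (forall i j, (i <= j)%N -> (j < n)%N -> Z j <= Z i) ->
  (forall i, (i < n)%N -> 0 <= Z i) ->
  \sum_(0 <= i < n) h i * Z i = u ->
  \sum_(0 <= i < n) Z i `^ p <= u `^ p *
    \big[Num.max/0]_(L < n) (L.+1%:R * (\sum_(0 <= i < L.+1) h i) `^ (- p)).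
Proof.
move=> p1 hp Zd Z0 hu.
have p0 : 0 < p by apply: lt_trans p1.
set M := \big[Num.max/0]_(L < n) _.
have term_le : forall k, (k < n)%N ->
    k.+1%:R * (\sum_(0 <= i < k.+1) h i) `^ (- p) <= M.
  move=> k kn.
  exact: (le_bigmax 0 (fun L : 'I_n => L.+1%:R * (\sum_(0 <= i < L.+1) h i) `^ (- p)) (Ordinal kn)).
have M0 : 0 <= M.
  by rewrite /M; elim/big_rec: _ => // i x _ Hx; rewrite le_max Hx orbT.
have u0 : 0 <= u.
  rewrite -hu big_nat sumr_ge0 // => i /andP [_ ilt].
  by rewrite mulr_ge0 ?Z0 // ltW // hp.
case: (eqVneq u 0) => [u0'|un0].
  have Zz : forall i, (i < n)%N -> Z i = 0.
    move: hu; rewrite u0' big_mkord => /psumr_eq0P H i ilt.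
    have := H (fun i _ => mulr_ge0 (ltW (hp _ (ltn_ord i))) (Z0 _ (ltn_ord i))) (Ordinal ilt) isT.
    by move/eqP; rewrite mulf_eq0 /= (gt_eqF (hp _ ilt)) /= => /eqP.
  rewrite u0' powR0 ?gt_eqF // mul0r le_eqVlt; apply/orP; left; apply/eqP.
  rewrite big_nat big1 // => i /andP[_ ilt]; rewrite Zz // powR0 // gt_eqF //.
have up : 0 < u by rewrite lt_neqAle eq_sym un0 u0.
pose Y k := if (k < n)%N then Z k else 0.
pose d k := Y k - Y k.+1.
have d0 : forall k, (k < n)%N -> 0 <= d k.
  move=> k kn; rewrite /d /Y kn subr_ge0; case: ifP => kn1.
    by apply: Zd => //; exact: leqnSn.
  exact: Z0.
have rep : forall i, (i < n)%N -> Z i = \sum_(0 <= k < n) (if (i <= k)%N then d k else 0).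
  move=> i ilt; rewrite -big_mkcond.
  have -> : \sum_(0 <= k < n | (i <= k)%N) d k = \sum_(i <= k < n) d k.
    by rewrite (big_nat_widenl i 0 n xpredT d) //; apply: eq_bigl.
  rewrite (eq_bigr (fun k => - (Y k.+1 - Y k))); last by move=> k _; rewrite /d opprB.
  rewrite sumrN telescope_sumr; last exact: ltnW.
  by rewrite /Y ltnn ilt sub0r opprK.
pose H k := \sum_(0 <= i < k.+1) h i.
have Hp : forall k, (k < n)%N -> 0 < H k.
  move=> k kn; rewrite /H big_nat_recr //= ltr_wpDl // ?hp //.
  rewrite big_nat sumr_ge0 // => i /andP[_ ik]; rewrite ltW // hp //.
  exact: ltn_trans ik kn.
have hu' : u = \sum_(0 <= k < n) d k * H k.
  rewrite -hu.
  transitivity (\sum_(0 <= i < n) \sum_(0 <= k < n) (if (i <= k)%N then h i * d k else 0)).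
    apply: eq_big_nat => i /andP[_ ilt]; rewrite (rep i ilt) mulr_sumr.
    by apply: eq_bigr => k _; case: ifP => _ //; rewrite mulr0.
  rewrite exchange_big; apply: eq_big_nat => k /andP[_ kn].
  rewrite (@sum_cond_le n k (fun i => h i * d k) kn) -mulr_suml mulrC //.
pose t k := d k * H k / u.
pose c k := u / H k.
have t0 : forall k, k \in index_iota 0 n -> 0 <= t k.
  move=> k; rewrite mem_index_iota => /andP[_ kn].
  by rewrite /t divr_ge0 // mulr_ge0 // ?d0 // ltW // Hp.
have t1 : \sum_(0 <= k < n) t k = 1.
  by rewrite /t -mulr_suml -hu' mulfV.
have Zt : forall i, (i < n)%N -> Z i = \sum_(0 <= k < n) t k * (if (i <= k)%N then c k else 0).
  move=> i ilt; rewrite rep //; apply: eq_big_nat => k /andP[_ kn].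
  case: ifP => _; last by rewrite mulr0.
  by rewrite /t /c alg5 // gt_eqF // Hp.
have cp : forall k, (k < n)%N -> c k `^ p = u `^ p * H k `^ (- p).
  move=> k kn; rewrite /c powRM //; last by rewrite invr_ge0 ltW // Hp.
  by rewrite -powR_inv1 ?ltW ?Hp // -powRrM mulN1r.
apply: (@le_trans _ _ (\sum_(0 <= i < n) \sum_(0 <= k < n) t k * (if (i <= k)%N then c k else 0) `^ p)).
  rewrite big_nat [X in _ <= X]big_nat; apply: ler_sum => i /andP[_ ilt].
  rewrite Zt //; apply: jensen_powR => // k; rewrite mem_index_iota => /andP[_ kn].
  by case: ifP => _ //; rewrite divr_ge0 // ltW // Hp.
rewrite (eq_bigr (fun i => \sum_(0 <= k < n) (if (i <= k)%N then t k * c k `^ p else 0))); last first.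
  move=> i _; apply: eq_bigr => k _; case: ifP => _ //.
  by rewrite powR0 ?gt_eqF // mulr0.
rewrite exchange_big.
apply: (@le_trans _ _ (\sum_(0 <= k < n) t k * (u `^ p * M))); last first.
  by rewrite -mulr_suml t1 mul1r.
rewrite big_nat [X in _ <= X]big_nat; apply: ler_sum => k /andP[_ kn].
rewrite (@sum_cond_le n k (fun _ => t k * c k `^ p) kn) sumr_const_nat subn0.
rewrite -mulr_natr mulrA (mulrC (t k)) -mulrA [_ * t k]mulrC.
rewrite -mulrA ler_wpM2l ?t0 ?mem_index_iota //.
rewrite cp // -mulrA ler_wpM2l ?powR_ge0 // mulrC.
exact: term_le.
Qed.

Lemma sum_pos (n : nat) (h : nat -> R) : (forall i, (i < n)%N -> 0 < h i) ->
  forall k, (k < n)%N -> 0 < \sum_(0 <= i < k.+1) h i.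
Proof.
move=> hp k kn; rewrite big_nat_recr //= ltr_wpDl // ?hp //.
rewrite big_nat sumr_ge0 // => i /andP[_ ik]; rewrite ltW // hp //.
exact: ltn_trans ik kn.
Qed.
End Aux.

Theorem corollary2 (R : realType) (N n : nat) (beta lambda v : R) (W : R -> R) :
  (1 <= n)%N -> (n <= N)%N -> 0 < beta < 1 -> 0 < lambda ->
  inverse_S_shaped W -> W 0 = 0 -> W 1 = 1 -> 0 <= v ->
  let opt := - powR (v / lambda) (1 / beta) *
     \big[Num.max/0]_(L < n)
        (L.+1%:R * powR (\sum_(1 <= i < L.+2) hminus W N i) (- (1 / beta))) in
  (exists y : 'I_n -> R, feasible W N v y /\ objective beta lambda y = opt) /\
  (forall y : 'I_n -> R, feasible W N v y -> opt <= objective beta lambda y).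
Proof.
case: n => [//|n] _ nN /andP[b0 b1] l0 [Wi _] W0 W1 v0 opt.
rewrite /opt; clear opt.
set p := 1 / beta.
have p1 : 1 < p by rewrite /p div1r invf_gt1.
have p0 : 0 < p by apply: lt_trans p1.
have N0 : (0 < N)%N by apply: leq_trans nN.
pose h i := hminus W N i.+1.
have hp : forall i, (i < n.+1)%N -> 0 < h i.
  move=> i ilt; rewrite /h /hminus subn1 /= subr_gt0; apply: Wi.
  - by rewrite divr_ge0 // ler0n.
  - by rewrite ltr_pM2r ?invr_gt0 ?ltr0n // ltr_nat.
  - rewrite ler_pdivrMr ?ltr0n // mul1r ler_nat; exact: leq_trans ilt nN.
have Mrw : \big[Num.max/0]_(L < n.+1) (L.+1%:R * (\sum_(1 <= i < L.+2) hminus W N i) `^ (- p))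
    = \big[Num.max/0]_(L < n.+1) (L.+1%:R * (\sum_(0 <= i < L.+1) h i) `^ (- p)).
  by apply: eq_bigr => L _; rewrite big_add1.
rewrite Mrw.
have sum_conv : forall F : 'I_n.+1 -> R,
    \sum_(i < n.+1) F i = \sum_(0 <= i < n.+1) F (inord i).
  by move=> F; rewrite big_mkord; apply: eq_bigr => i _; rewrite inord_val.
split; last first.
  move=> y [yd [y0 ys]].
  pose Z i := y (inord i) / lambda.
  have := @main_ineq R n.+1 p (v / lambda) h Z p1 hp.
  have Zd : forall i j, (i <= j)%N -> (j < n.+1)%N -> Z j <= Z i.
    move=> i j ij jn; rewrite /Z ler_pM2r ?invr_gt0 //; apply: yd.
    by rewrite !inordK // (leq_ltn_trans ij jn).
  have Z0 : forall i, (i < n.+1)%N -> 0 <= Z i.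
    by move=> i _; rewrite /Z divr_ge0 // ltW.
  have Zs : \sum_(0 <= i < n.+1) h i * Z i = v / lambda.
    rewrite -ys sum_conv mulr_suml; apply: eq_big_nat => i /andP[_ ilt].
    by rewrite /h /Z inordK // mulrA.
  move=> /(_ Zd Z0 Zs) H.
  rewrite /objective sum_conv mulNr lerN2.
  exact: H.
have Fge0 : forall L : 'I_n.+1, true ->
    0 <= L.+1%:R * (\sum_(0 <= i < L.+1) h i) `^ (- p).
  by move=> L _; rewrite mulr_ge0 ?ler0n ?powR_ge0.
rewrite (@bigmax_eq_arg _ _ _ 0 ord0 (fun _ => true) _ isT Fge0).
set L0 := [arg max_(i > ord0 | true) _]%O.
set HL := \sum_(0 <= i < L0.+1) h i.
have HLp : 0 < HL by apply: (@sum_pos R n.+1).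
exists (fun i : 'I_n.+1 => if (i <= L0)%N then v / HL else 0).
split.
  split; [|split].
  - move=> i j ij; case: ifP => jL.
      by rewrite (leq_trans ij jL).
    by case: ifP => _ //; rewrite divr_ge0 // ltW.
  - by move=> i; case: ifP => _ //; rewrite divr_ge0 // ltW.
  - rewrite sum_conv.
    rewrite (eq_big_nat _ _ (F2 := fun i => if (i <= L0)%N then h i * (v / HL) else 0)); last first.
      move=> i /andP[_ ilt]; rewrite inordK //.
      by case: ifP => _; rewrite ?mulr0.
    rewrite (@sum_cond_le R n.+1 L0 (fun i => h i * (v / HL)) (ltn_ord L0)).
    by rewrite -mulr_suml -/HL mulrC divfK // gt_eqF.
rewrite /objective sum_conv.
rewrite (eq_big_nat _ _ (F2 := fun i => if (i <= L0)%N then ((v / lambda) / HL) `^ p else 0)); last first.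
  move=> i /andP[_ ilt]; rewrite inordK //.
  case: ifP => _; last by rewrite mul0r powR0 // gt_eqF.
  by rewrite mulrAC.
rewrite (@sum_cond_le R n.+1 L0 (fun _ => ((v / lambda) / HL) `^ p) (ltn_ord L0)).
rewrite sumr_const_nat subn0.
rewrite powRM ?divr_ge0 ?invr_ge0 ?(ltW l0) ?(ltW HLp) //.
rewrite -(powR_inv1 (ltW HLp)) -powRrM mulN1r.
rewrite -mulr_natr; ring.
Qed.
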